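(* In the basic model with $n$ odd, the direction agreement problem can be solved deterministically in $O(1)$ rounds.
   Context: Model (basic): $n>4$ agents are at distinct, arbitrary initial positions on a circle of circumference $1$ and act in synchronised unit-time rounds. Each agent has its own notion of right (clockwise) and left; these need not be consistent across agents. At the start of each round every agent $a$ chooses $\mathrm{dir}_a\in\{\text{right},\text{left}\}$ and moves at unit speed. Agents never pass: two colliding agents instantly reverse direction. There is no communication. At the end of a round each agent learns only the clockwise distance, in its own orientation, from its start-of-round position to its end-of-round position. Agents have distinct IDs in $\{1,\dots,N\}$, $N\ge n$ known, and know the parity of $n$. The direction agreement problem is solved when all agents have a coherent view of which direction is clockwise. *)

(* Defs.v *)
From mathcomp Require Import all_boot all_order all_algebra.
From mathcomp Require Import reals.
Set Implicit Arguments. Unset Strict Implicit. Unset Printing Implicit Defensive.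
Import Order.TTheory GRing.Theory Num.Theory.
Local Open Scope ring_scope.

(* The circle of circumference 1 is [0,1); a global "clockwise" is the
   increasing direction.  Agents are indexed by 'I_n (indices carry no
   geometric meaning).  chir a = true  means agent a's "right" is global
   clockwise.  Local directions: true = right, false = left. *)

Definition cwdist (R : realType) (p q : R) : R :=
  if p <= q then q - p else q - p + 1.

Definition rank (R : realType) (n : nat) (pos : 'I_n -> R) (a : 'I_n) : nat :=
  #|[pred b | pos b < pos a]|.

Definition rot_shift (n : nat) (gdir : 'I_n -> bool) : int :=
  \sum_(b : 'I_n) (if gdir b then 1 else -1).

(* Positions after one unit-time round at unit speed with bouncing
   collisions (gdir a = true iff a moves globally clockwise).  Since each
   agent covers distance 1 = circumference, the virtual (pass-through)
   agents end where they started; bouncing preserves cyclic order and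
   conserves total lifted displacement, so the agent of clockwise rank r
   ends at the position of the agent of rank r + rot_shift (mod n). *)
Definition round_pos (R : realType) (n : nat) (pos : 'I_n -> R)
    (gdir : 'I_n -> bool) : 'I_n -> R :=
  fun a =>
    let t := absz ((Posz (rank pos a) + rot_shift gdir) %% Posz n)%Z in
    match [pick b | rank pos b == t] with
    | Some b => pos b
    | None => pos a
    end.

(* Execution of a deterministic algorithm for T rounds.
   choose id hist : the local direction chosen by the agent with ID id given
   its history of observations hist (the algorithm itself is allowed to
   depend on the known N and parity of n). *)
Fixpoint run (R : realType) (n : nat) (choose : nat -> seq R -> bool)
    (chir : 'I_n -> bool) (id : 'I_n -> nat) (pos : 'I_n -> R) (T : nat)
    : ('I_n -> R) * ('I_n -> seq R) :=
  match T with
  | 0 => (pos, fun _ => [::])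
  | T'.+1 =>
      let ph := run choose chir id pos T' in
      let p := ph.1 in
      let h := ph.2 in
      let gdir := fun a => choose (id a) (h a) == chir a in
      let p' := round_pos p gdir in
      (p', fun a => rcons (h a)
                     (if chir a then cwdist (p a) (p' a)
                                else cwdist (p' a) (p a)))
  end.

(* Direction agreement: agent a outputs b_a = "my right is clockwise";
   this designates global clockwise iff b_a == chir a.  Coherent views:
   all agents designate the same global direction. *)
Definition coherent (n : nat) (chir : 'I_n -> bool) (out : 'I_n -> bool) : Prop :=
  exists c : bool, forall a : 'I_n, (out a == chir a) = c.

(* Main.v *)
Require Import Defs.
From mathcomp Require Import all_boot all_order all_algebra.
From mathcomp Require Import reals.
From mathcomp Require Import zify ring lra.
Import Order.TTheory GRing.Theory Num.Theory.
Set Implicit Arguments. Unset Strict Implicit. Unset Printing Implicit Defensive.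
Local Open Scope ring_scope.

Lemma rank_lt_pos (R : realType) n (q : 'I_n -> R) a b :
  q a < q b -> (rank q a < rank q b)%N.
Proof.
move=> hab; rewrite /rank; apply: proper_card; apply/properP; split.
  apply/subsetP => c; rewrite !inE => hc; exact: lt_trans hc hab.
by exists a; rewrite !inE ?ltxx.
Qed.

Lemma rank_inj (R : realType) n (q : 'I_n -> R) : injective q -> injective (rank q).
Proof.
move=> qi a b hab; apply: qi; apply/eqP; apply/negPn/negP => hne.
case/orP: (lt_total hne) => /(rank_lt_pos) h; by rewrite hab ltnn in h.
Qed.

Lemma rank_ltn (R : realType) n (q : 'I_n -> R) a : (rank q a < n)%N.
Proof.
rewrite /rank; suff: (#|[pred b | (q b < q a)%R]| < #|'I_n|)%N by rewrite card_ord.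
apply: proper_card; apply/properP; split.
  exact/subsetP.
by exists a; rewrite !inE ?ltxx.
Qed.

Lemma rank_le (R : realType) n (q : 'I_n -> R) a b : injective q ->
  (q a <= q b) = (rank q a <= rank q b)%N.
Proof.
move=> qi; case: (ltgtP (q a) (q b)) => h.
- by rewrite (ltnW (rank_lt_pos h)).
- by rewrite leqNgt (rank_lt_pos h).
- by rewrite (qi _ _ h) leqnn.
Qed.

Lemma rank_onto (R : realType) n (q : 'I_n -> R) : injective q ->
  forall t, (t < n)%N -> exists b, rank q b = t.
Proof.
move=> qi t ht.
pose f := fun a => Ordinal (rank_ltn q a).
have fi : injective f by move=> a b /(congr1 val) /= /(rank_inj qi).
have := inj_card_onto fi (leqnn _) (Ordinal ht).
by case/codomP => b /(congr1 val) /= ->; exists b.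
Qed.


Lemma shift_mod (n r : nat) (s : int) : (0 < n)%N ->
  absz ((Posz r + s) %% Posz n)%Z = ((r + absz (s %% Posz n)%Z) %% n)%N.
Proof.
move=> n0.
have hs : (s %% Posz n)%Z = Posz (absz (s %% Posz n)%Z).
  by rewrite gez0_abs // modz_ge0 // lt0n_neq0.
by rewrite -modzDmr hs -PoszD modz_nat.
Qed.

Lemma round_spec (R : realType) n (q : 'I_n -> R) g : injective q ->
  forall a, exists b, rank q b = ((rank q a + absz (rot_shift g %% Posz n)%Z) %% n)%N
     /\ round_pos q g a = q b.
Proof.
move=> qi a.
have n0 : (0 < n)%N by case: a => /= m hm; apply: leq_ltn_trans hm.
rewrite /round_pos shift_mod //.
case: pickP => [b /eqP hb | hn]; first by exists b.
have [b hb] := rank_onto qi (ltn_pmod (rank q a + absz (rot_shift g %% Posz n)%Z) n0).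
by have := hn b; rewrite hb eqxx.
Qed.

Lemma rank_comp (R : realType) n (q : 'I_n -> R) (sg : 'I_n -> 'I_n) :
  injective sg -> forall a, rank (fun x => q (sg x)) a = rank q (sg a).
Proof.
move=> si a; rewrite /rank.
have -> : #|[pred b | q (sg b) < q (sg a)]| = #|sg @^-1: [set b | q b < q (sg a)]|.
  by apply: eq_card => x; rewrite !inE.
rewrite card_preimset //; apply: eq_card => x; by rewrite !inE.
Qed.


Lemma cw_rank (R : realType) n (q : 'I_n -> R) x y : injective q ->
  cwdist (q x) (q y) = q y - q x + (if (rank q y < rank q x)%N then 1 else 0).
Proof.
move=> qi; rewrite /cwdist rank_le //.
case: leqP => h; first by rewrite addr0.
by [].
Qed.

Lemma rank_ltr (R : realType) n (q : 'I_n -> R) x y : injective q ->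
  (q x < q y) = (rank q x < rank q y)%N.
Proof. by move=> qi; rewrite ltNge rank_le // -ltnNge. Qed.

Lemma modn_cases x k n : (x < n)%N -> (k < n)%N ->
  ((x + k) %% n = if (x + k < n)%N then x + k else x + k - n)%N.
Proof.
move=> hx hk; case: ltnP => h; first by rewrite modn_small.
by rewrite -{1}(subnK h) modnDr modn_small //; lia.
Qed.

Lemma arith ra rb rc k n : (ra < n)%N -> (0 < k < n)%N ->
  rb = (if (ra + k < n)%N then ra + k else ra + k - n)%N ->
  rc = (if (rb + k < n)%N then rb + k else rb + k - n)%N ->
  ((k.*2 < n)%N -> (((rb < ra) + (rc < rb) = 0)%N /\ (ra < rc)%N) \/
                   (((rb < ra) + (rc < rb) = 1)%N /\ (rc < ra)%N)) /\
  ((n < k.*2)%N -> (((rb < ra) + (rc < rb) = 1)%N /\ (ra < rc)%N) \/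
                   (((rb < ra) + (rc < rb) = 2)%N /\ (rc < ra)%N)).
Proof.
move=> ha hk; case: ifP => h1 ->; case: ifP => h2 ->;
rewrite -!muln2; split => h5; lia.
Qed.

Lemma b2R (R : realType) (b : bool) : (if b then 1 else 0 : R) = (b : nat)%:R.
Proof. by case: b. Qed.

Lemma core (R : realType) n (q : 'I_n -> R) a b c k : injective q ->
  (forall x, 0 <= q x < 1) ->
  rank q b = ((rank q a + k) %% n)%N -> rank q c = ((rank q b + k) %% n)%N ->
  (0 < k < n)%N ->
  ((k.*2 < n)%N -> cwdist (q a) (q b) + cwdist (q b) (q c) < 1) /\
  ((n < k.*2)%N -> 1 < cwdist (q a) (q b) + cwdist (q b) (q c)).
Proof.
move=> qi hq hb hc hk.
rewrite !cw_rank // !b2R.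
have ha := rank_ltn q a.
have hA := hq a; have hC := hq c; have hB := hq b.
have hbn := rank_ltn q b.
have hkn : (k < n)%N by case/andP: hk.
move: hb hc; rewrite !modn_cases // => hb hc.
have [F1 F2] := arith ha hk hb hc.
have E : q b - q a + ((rank q b < rank q a)%N : nat)%:R + (q c - q b + ((rank q c < rank q b)%N : nat)%:R)
   = q c - q a + (((rank q b < rank q a)%N : nat) + ((rank q c < rank q b)%N : nat))%:R.
  by rewrite natrD; ring.
rewrite E; split => hh.
- case: (F1 hh) => [[-> h]|[-> h]].
  + have : q a < q c by rewrite rank_ltr. lra.
  + have : q c < q a by rewrite rank_ltr. lra.
- case: (F2 hh) => [[-> h]|[-> h]].
  + have : q a < q c by rewrite rank_ltr. lra.
  + have : q c < q a by rewrite rank_ltr. lra.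
Qed.


Lemma shift_val n (g : 'I_n -> bool) :
  rot_shift g = Posz #|[pred b | g b]| - Posz #|[pred b | ~~ g b]|.
Proof.
rewrite /rot_shift (bigID g) /=.
rewrite (eq_bigr (fun _ => 1)); last by move=> i ->.
rewrite [X in _ + X](eq_bigr (fun _ => -1)); last by move=> i /negbTE ->.
rewrite !sumr_const.
rewrite mulNrn !natz.
have -> : #|[pred i | g i]| = #|g| by apply: eq_card.
have -> : #|[pred i | ~~ g i]| = #|(fun i => ~~ g i)| by apply: eq_card.
by [].
Qed.

Lemma k0_const n (g : 'I_n -> bool) : odd n ->
  absz (rot_shift g %% Posz n)%Z = 0%N -> (forall a, g a) \/ (forall a, ~~ g a).
Proof.
move=> hn /eqP; rewrite absz_eq0 => /eqP h0.
set c := #|[pred b | g b]|.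
set c' := #|[pred b | ~~ g b]|.
have hcc : (c + c' = n)%N.
  by rewrite -[RHS](card_ord n) -(cardC [pred b | g b]); congr (_ + _); apply: eq_card.
move: h0; rewrite shift_val -/c -/c' -(modzDr _ (Posz n)).
have -> : Posz c - Posz c' + Posz n = Posz (c * 2) by rewrite -hcc; lia.
rewrite modz_nat => h.
have hd : (n %| 2 * c)%N by rewrite /dvdn mulnC; apply/eqP; case: h.
move: hd; rewrite Gauss_dvdr; last by rewrite coprimen2.
move=> hd.
have : (c == 0)%N || (c == n)%N.
  case: (posnP c) => [->//|cp].
  have := dvdn_leq cp hd; lia.
case/orP => /eqP hc.
- right => a; apply/negP => ga.
  have : (0 < c)%N by apply/card_gt0P; exists a.
  by rewrite hc.
- left => a; apply/negPn/negP => ga.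
  have : (0 < c')%N by apply/card_gt0P; exists a.
  lia.
Qed.


Lemma cw_flip (R : realType) (x y : R) : x != y ->
  cwdist y x = 1 - cwdist x y.
Proof.
move=> hxy; rewrite /cwdist.
case: (ltgtP x y) => h /=; try ring.
by rewrite h eqxx in hxy.
Qed.

Lemma cw0 (R : realType) (x : R) : cwdist x x = 0.
Proof. by rewrite /cwdist lexx subrr. Qed.

Lemma modk_neq r k n : (r < n)%N -> (0 < k < n)%N -> ((r + k) %% n)%N != r.
Proof. move=> hr hk; rewrite modn_cases; [|lia|lia]; case: ltnP => h; lia. Qed.

Theorem proposition2 (R : realType) :
  exists T : nat, forall N : nat,
  exists choose decide : nat -> seq R -> bool,
  forall (n : nat) (pos : 'I_n -> R) (chir : 'I_n -> bool) (id : 'I_n -> nat),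
    (4 < n)%N -> odd n -> (n <= N)%N ->
    injective pos -> (forall a, 0 <= pos a < 1) ->
    injective id -> (forall a, 1 <= id a <= N)%N ->
    coherent chir (fun a => decide (id a) ((run choose chir id pos T).2 a)).
Proof.
exists 2%N => N.
exists (fun _ _ => true), (fun _ h => nth 0 h 0 + nth 0 h 1 < 1).
move=> n pos chir id hn4 hodd _ posi hpos _ _.
rewrite /=.
set g := (fun a0 : 'I_n => true == chir a0).
set p1 := round_pos pos g.
set p2 := round_pos p1 g.
set k := absz (rot_shift g %% Posz n)%Z.
have n0 : (0 < n)%N by lia.
have [sg hsg] := fin_all_exists (round_spec g posi).
rewrite -/k in hsg.
have si : injective sg.
  move=> x y hxy; apply: (rank_inj posi).
  have := (hsg x).1; rewrite hxy (hsg y).1 => /eqP.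
  rewrite eqn_modDr !modn_small ?rank_ltn // => /eqP ->. by [].
have p1E : forall x, p1 x = pos (sg x) by move=> x; exact: (hsg x).2.
have p1i : injective p1.
  by move=> x y; rewrite !p1E => /posi /si.
have rp1 : forall x, rank p1 x = rank pos (sg x).
  move=> x; rewrite -(rank_comp pos si) /rank; apply: eq_card => y.
  by rewrite !inE !p1E.
have hp1 : forall a, 0 <= p1 a < 1 by move=> a; rewrite p1E.
have hkn : (k < n)%N.
  have hn' : (0 < Posz n)%R by rewrite ltz_nat.
  have := ltz_pmod (rot_shift g) hn'.
  have := modz_ge0 (rot_shift g) (lt0r_neq0 hn').
  rewrite /k; case: (rot_shift g %% Posz n)%Z => [m|m] //= _.
have hr2 : forall a, exists b, rank pos (sg b) = ((rank pos (sg a) + k) %% n)%N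
                  /\ p2 a = pos (sg b).
  move=> a; have [b [hb1 hb2]] := round_spec g p1i a.
  by exists b; rewrite -!rp1 hb1 /p2 hb2 p1E.
case: (posnP k) => hk.
- (* all agents have the same chirality *)
  have sgid : forall a, sg a = a.
    move=> a; apply: (rank_inj posi); rewrite (hsg a).1 hk addn0 modn_small //.
    exact: rank_ltn.
  have [hall|hall] := k0_const hodd hk.
  + exists true => a /=.
    have [b [hb1 hb]] := hr2 a.
    have ebA : sg b = a.
      by apply: (rank_inj posi); rewrite hb1 hk addn0 modn_small ?rank_ltn // sgid.
    rewrite hb ebA !p1E !sgid !cw0 !if_same /= add0r ltr01.
    exact: hall a.
  + exists false => a /=.
    have [b [hb1 hb]] := hr2 a.
    have ebA : sg b = a.
      by apply: (rank_inj posi); rewrite hb1 hk addn0 modn_small ?rank_ltn // sgid.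
    rewrite hb ebA !p1E !sgid !cw0 !if_same /= add0r ltr01.
    exact: negbTE (hall a).
- have hk2 : (0 < k < n)%N by rewrite hk hkn.
  have hne : k.*2 != n.
    apply/eqP => e; move: hodd; by rewrite -e odd_double.
  exists (k.*2 < n)%N => a /=.
  have [b [hb1 hb2]] := hr2 a.
  rewrite hb2 p1E.
  have [C1 C2] := core posi hpos (hsg a).1 hb1 hk2.
  have nab : pos a != pos (sg a).
    apply/negP => /eqP /posi e.
    have := modk_neq (rank_ltn pos a) hk2; by rewrite -(hsg a).1 -e eqxx.
  have nbc : pos (sg a) != pos (sg b).
    apply/negP => /eqP /posi e.
    have := modk_neq (rank_ltn pos (sg a)) hk2; by rewrite -hb1 -e eqxx.
  set S := cwdist (pos a) (pos (sg a)) + cwdist (pos (sg a)) (pos (sg b)).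
  have HS : ((k.*2 < n)%N -> S < 1) /\ (~~ (k.*2 < n)%N -> 1 < S).
    split => // h; apply: C2; rewrite ltn_neqAle eq_sym hne /=; lia.
  case: (chir a) => /=.
  + rewrite -/S.
    case: (ltnP k.*2 n) => h.
    * by rewrite (HS.1 h).
    * have : 1 < S by apply: HS.2; rewrite -leqNgt.
      by move=> hS; rewrite eqb_id ltNge (ltW hS).
  + rewrite (cw_flip nab) (cw_flip nbc).
    have -> : 1 - cwdist (pos a) (pos (sg a)) + (1 - cwdist (pos (sg a)) (pos (sg b))) = 2 - S.
      by rewrite /S; ring.
    case: (ltnP k.*2 n) => h.
    * have := HS.1 h => hS.
      have -> : (2 - S < 1) = false by apply/negbTE; rewrite -leNgt; lra.
      by [].
    * have : 1 < S by apply: HS.2; rewrite -leqNgt.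
      move=> hS; have -> : (2 - S < 1) = true by apply/idP; lra.
      by [].
Qed.
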